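(* Let $\mathcal X=\{X_1,\dots,X_n\}$, $n\in\mathbb N$, be a multi-set of real symmetric $2\times2$ matrices, and let $\lambda_1$ be the unique largest eigenvalue of all matrices of $\mathcal X$, belonging to $X_1$, with normalised eigenvector $u_1$. Then the log-exp-supremum of $\mathcal X$ has the representation $$S=\lim_{m\to\infty}\frac1m\log\sum_{i=1}^n\exp(mX_i)=\lambda_1u_1u_1^{\mathsf T}+\mu_*v_1v_1^{\mathsf T},$$ where $v_1$ is the normalised vector perpendicular to $u_1$ and $\mu_*$ is the largest eigenvalue of $\mathcal X$ (other than the occurrence $\lambda_1$) whose associated normalised eigenvector is not aligned with $u_1$.
   Context: $\exp$ and $\log$ denote the matrix exponential and matrix logarithm. Every real symmetric $2\times2$ matrix $X_i$ is written in spectral form $X_i=\lambda_i u_iu_i^{\mathsf T}+\mu_i v_iv_i^{\mathsf T}$ with $\lambda_i\ge\mu_i$, $u_i=(\cos\varphi_i,\sin\varphi_i)^{\mathsf T}$, $v_i=(-\sin\varphi_i,\cos\varphi_i)^{\mathsf T}$, $\varphi_i\in[-\pi/2,\pi/2]$. ''The eigenvalues of $\mathcal X$'' means the multi-set of all $2n$ numbers $\lambda_1,\mu_1,\dots,\lambda_n,\mu_n$, each with its associated eigenvector ($u_i$ for $\lambda_i$, $v_i$ for $\mu_i$); an eigenvalue is unique if it occurs exactly once in this multi-set. Two unit vectors are aligned if they are equal up to sign. The log-exp-supremum (LES) of $\mathcal X$ is $\mathrm{Sup}_{\mathrm{LE}}(\mathcal X):=\lim_{m\to\infty}\frac1m\log\sum_{i=1}^n\exp(mX_i)$.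 *)

(* Defs.v *)
From HB Require Import structures.
From mathcomp Require Import all_boot all_order all_algebra.
From mathcomp Require Import all_classical all_reals all_analysis.
Set Implicit Arguments. Unset Strict Implicit. Unset Printing Implicit Defensive.
Import Order.TTheory GRing.Theory Num.Theory.
Import numFieldNormedType.Exports.
Local Open Scope classical_set_scope.
Local Open Scope ring_scope.

Definition mexp {R : realType} (A : 'M[R]_2) : 'M[R]_2 :=
  lim ((fun N : nat => \sum_(k < N) ((k`!)%:R^-1 *: A ^+ k)) @ \oo).

(* Matrix logarithm (of a symmetric positive definite matrix): the unique
   real symmetric matrix L with exp L = B (chosen by xget; 0 if none). *)
Definition mlog {R : realType} (B : 'M[R]_2) : 'M[R]_2 :=
  xget 0 [set L : 'M[R]_2 | L^T = L /\ mexp L = B].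

Definition vec2 {R : realType} (a b : R) : 'cV[R]_2 :=
  \col_(i < 2) (if (i : nat) == 0%N then a else b).

Definition uvec {R : realType} (phi : R) : 'cV[R]_2 := vec2 (cos phi) (sin phi).
Definition vvec {R : realType} (phi : R) : 'cV[R]_2 := vec2 (- sin phi) (cos phi).

Definition spectral {R : realType} (lam mu phi : R) : 'M[R]_2 :=
  lam *: (uvec phi *m (uvec phi)^T) + mu *: (vvec phi *m (vvec phi)^T).

Definition aligned {R : realType} (x y : 'cV[R]_2) : Prop := x = y \/ x = - y.

(* The multiset of eigenvalues of X = {X_0,...,X_n}: indexed by (i, b),
   b = true for lambda_i (eigenvector u_i), b = false for mu_i (eigenvector v_i). *)
Definition eigval {R : realType} {n : nat} (lam mu : 'I_n -> R)
  (k : 'I_n * bool) : R := if k.2 then lam k.1 else mu k.1.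
Definition eigvec {R : realType} {n : nat} (phi : 'I_n -> R)
  (k : 'I_n * bool) : 'cV[R]_2 := if k.2 then uvec (phi k.1) else vvec (phi k.1).

(* The set is
   nonempty since it contains (ord0, false) (v_1 is perpendicular to u_1),
   so taking mu_1 as the initial value of the max is harmless. *)
Definition mu_star {R : realType} {n : nat} (lam mu phi : 'I_n.+1 -> R) : R :=
  \big[Num.max/mu ord0]_(k : 'I_n.+1 * bool |
      (k != (ord0, true)) && ~~ `[< aligned (eigvec phi k) (uvec (phi ord0)) >])
    eigval lam mu k.

(* Main.v *)
Require Import Defs.
From HB Require Import structures.
From mathcomp Require Import all_boot all_order all_algebra.
From mathcomp Require Import all_classical all_reals all_analysis.
From mathcomp Require Import ring lra.
Import Order.TTheory GRing.Theory Num.Theory.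
Import numFieldNormedType.Exports.
Local Open Scope classical_set_scope.
Local Open Scope ring_scope.
Set Implicit Arguments. Unset Strict Implicit. Unset Printing Implicit Defensive.

Section M2.
Variable R : realType.
Definition i0 : 'I_2 := ord0.
Definition i1 : 'I_2 := ord_max.
Definition m2 (a b c d : R) : 'M[R]_2 :=
  \matrix_(i < 2, j < 2) if (i : nat) == 0%N then (if (j : nat) == 0%N then a else b)
                          else (if (j : nat) == 0%N then c else d).

Lemma ord2P (i : 'I_2) : i = i0 \/ i = i1.
Proof. case: i => [[|[|k]]] hk; [left|right|by []]; exact: val_inj. Qed.

Lemma m2E (M : 'M[R]_2) : M = m2 (M i0 i0) (M i0 i1) (M i1 i0) (M i1 i1).
Proof.
apply/matrixP => i j; rewrite mxE.
by case: (ord2P i) => ->; case: (ord2P j) => ->.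
Qed.

Lemma m2_inj a b c d a' b' c' d' : m2 a b c d = m2 a' b' c' d' ->
  [/\ a = a', b = b', c = c' & d = d'].
Proof.
move=> /matrixP h.
have := h i0 i0; have := h i0 i1; have := h i1 i0; have := h i1 i1.
by rewrite !mxE /=; do 4 move=> ->.
Qed.

Lemma m2_mul a b c d a' b' c' d' :
  m2 a b c d * m2 a' b' c' d' =
  m2 (a * a' + b * c') (a * b' + b * d') (c * a' + d * c') (c * b' + d * d').
Proof.
rewrite -mulmxE; apply/matrixP => i j; rewrite !mxE !big_ord_recl big_ord0 !mxE /=.
by case: (ord2P i) => ->; case: (ord2P j) => -> /=; rewrite addr0.
Qed.

Lemma m2_add a b c d a' b' c' d' :
  m2 a b c d + m2 a' b' c' d' = m2 (a + a') (b + b') (c + c') (d + d').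
Proof.
apply/matrixP => i j; rewrite !mxE.
by case: (ord2P i) => ->; case: (ord2P j) => ->.
Qed.

Lemma m2_opp a b c d : - m2 a b c d = m2 (- a) (- b) (- c) (- d).
Proof.
apply/matrixP => i j; rewrite !mxE.
by case: (ord2P i) => ->; case: (ord2P j) => ->.
Qed.

Lemma m2_sub a b c d a' b' c' d' :
  m2 a b c d - m2 a' b' c' d' = m2 (a - a') (b - b') (c - c') (d - d').
Proof. by rewrite m2_opp m2_add. Qed.

Lemma m2_scale k a b c d : k *: m2 a b c d = m2 (k * a) (k * b) (k * c) (k * d).
Proof.
apply/matrixP => i j; rewrite !mxE.
by case: (ord2P i) => ->; case: (ord2P j) => ->.
Qed.

Lemma m2_1 : (1 : 'M[R]_2) = m2 1 0 0 1.
Proof.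
apply/matrixP => i j; rewrite !mxE.
by case: (ord2P i) => ->; case: (ord2P j) => ->.
Qed.

Lemma m2_0 : (0 : 'M[R]_2) = m2 0 0 0 0.
Proof.
apply/matrixP => i j; rewrite !mxE.
by case: (ord2P i) => ->; case: (ord2P j) => ->.
Qed.

Lemma m2_tr a b c d : (m2 a b c d)^T = m2 a c b d.
Proof.
apply/matrixP => i j; rewrite !mxE.
by case: (ord2P i) => ->; case: (ord2P j) => ->.
Qed.

Lemma outer2 (x y : R) : vec2 x y *m (vec2 x y)^T = m2 (x * x) (x * y) (y * x) (y * y).
Proof.
apply/matrixP => i j; rewrite !mxE big_ord_recl big_ord0 !mxE /=.
by case: (ord2P i) => ->; case: (ord2P j) => -> /=; rewrite addr0.
Qed.

End M2.
Arguments m2 {R}.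
Arguments m2E {R}.
Arguments m2_inj {R}.
Arguments m2_mul {R}.
Arguments m2_add {R}.
Arguments m2_opp {R}.
Arguments m2_sub {R}.
Arguments m2_scale {R}.
Arguments m2_1 {R}.
Arguments m2_0 {R}.
Arguments m2_tr {R}.
Arguments outer2 {R}.

Section Mexp.
Variable R : realType.

Lemma exp_series_cvg (a : R) :
  (fun N : nat => \sum_(k < N) ((k`!)%:R^-1 * a ^+ k)) @ \oo --> expR a.
Proof.
have := is_cvg_series_exp_coeff a.
rewrite expRE /=.
have -> : (fun N : nat => \sum_(k < N) ((k`!)%:R^-1 * a ^+ k)) = series (exp_coeff a).
  apply/funext => N; rewrite /series /= big_mkord exp_coeffE //.
move=> h.
have -> : pseries (R:=R) [eta fun n0 : nat => n0`!%:R^-1] a = series (exp_coeff a).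
  apply/funext => N; rewrite /pseries /series /= exp_coeffE //.
exact: h.
Qed.

Lemma mexp_PQ (P Q : 'M[R]_2) (a b : R) :
  P * P = P -> Q * Q = Q -> P * Q = 0 -> Q * P = 0 -> P + Q = 1 ->
  mexp (a *: P + b *: Q) = expR a *: P + expR b *: Q.
Proof.
move=> PP QQ PQ QP PQ1.
have pw k : (a *: P + b *: Q) ^+ k = a ^+ k *: P + b ^+ k *: Q.
  elim: k => [|k IH]; first by rewrite !expr0 !scale1r.
  rewrite exprS IH mulrDl !mulrDr -!scalerAl -!scalerAr.
  by rewrite PP QQ PQ QP !scaler0 addr0 add0r !scalerA -!exprS.
rewrite /mexp.
have -> : (fun N : nat => \sum_(k < N) ((k`!)%:R^-1 *: (a *: P + b *: Q) ^+ k)) =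
  (fun N : nat => (\sum_(k < N) ((k`!)%:R^-1 * a ^+ k)) *: P +
                  (\sum_(k < N) ((k`!)%:R^-1 * b ^+ k)) *: Q).
  apply/funext => N; rewrite !scaler_suml -big_split /=.
  by apply: eq_bigr => k _; rewrite pw scalerDr !scalerA.
apply: cvg_lim => //.
apply: cvgD; apply: cvgZ => //; [exact: exp_series_cvg| exact: cvg_cst
   | exact: exp_series_cvg | exact: cvg_cst].
Qed.

End Mexp.
Section Spec.
Variable R : realType.
Implicit Types M S L : 'M[R]_2.

Definition mA M := M i0 i0.
Definition mB M := M i1 i1.
Definition mC M := M i0 i1.
Definition rdM M := Num.sqrt ((mA M - mB M) ^+ 2 + 4 * mC M ^+ 2).
Definition s1M M := (mA M + mB M + rdM M) / 2.
Definition s2M M := (mA M + mB M - rdM M) / 2.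
Definition PmM M := (rdM M)^-1 *: (M - s2M M *: 1).
Definition QmM M := 1 - PmM M.
Definition LmM M := ln (s1M M) *: PmM M + ln (s2M M) *: QmM M.

Lemma symE M : M^T = M -> M i1 i0 = M i0 i1.
Proof. by move/matrixP => /(_ i0 i1); rewrite mxE. Qed.

Lemma rd_ge0 M : 0 <= rdM M. Proof. exact: sqrtr_ge0. Qed.

Lemma rd_sq M : rdM M ^+ 2 = (mA M - mB M) ^+ 2 + 4 * mC M ^+ 2.
Proof. by rewrite sqr_sqrtr // addr_ge0 ?sqr_ge0 // mulr_ge0 ?sqr_ge0. Qed.

Lemma s_sum M : s1M M + s2M M = mA M + mB M.
Proof. rewrite /s1M /s2M; lra. Qed.

Lemma s_prod M : s1M M * s2M M = mA M * mB M - mC M ^+ 2.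
Proof. have := rd_sq M; rewrite /s1M /s2M => h. lra. Qed.

Lemma s_diff M : s1M M - s2M M = rdM M.
Proof. rewrite /s1M /s2M; lra. Qed.

Lemma M_m2 M : M^T = M -> M = m2 (mA M) (mC M) (mC M) (mB M).
Proof. by move=> /symE h; rewrite {1}(m2E M) h. Qed.

Lemma NN M : M^T = M ->
  (M - s2M M *: 1) * (M - s2M M *: 1) = rdM M *: (M - s2M M *: 1).
Proof.
move=> hM; have := rd_sq M; rewrite (M_m2 hM) /s2M /mA /mB /mC !mxE /= => h.
rewrite m2_1 !m2_scale !m2_sub m2_mul m2_scale.
by congr m2; lra.
Qed.

Lemma PP M : M^T = M -> rdM M != 0 -> PmM M * PmM M = PmM M.
Proof.
move=> hM hr; rewrite /PmM -scalerAl -scalerAr NN // !scalerA.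
by congr (_ *: _); field.
Qed.

Lemma idem_rel (P : 'M[R]_2) : P * P = P ->
  [/\ (1 - P) * (1 - P) = 1 - P, P * (1 - P) = 0, (1 - P) * P = 0 & P + (1 - P) = 1].
Proof.
move=> h; split.
- by rewrite mulrBl !mulrBr !mul1r mulr1 h subrr subr0.
- by rewrite mulrBr mulr1 h subrr.
- by rewrite mulrBl mul1r h subrr.
- by rewrite addrC subrK.
Qed.

Lemma Mdec M : M^T = M -> rdM M != 0 -> M = s1M M *: PmM M + s2M M *: QmM M.
Proof.
move=> hM hr; rewrite /QmM scalerBr addrCA -scalerBl s_diff.
by rewrite /PmM scalerA mulfV // scale1r addrCA subrr addr0.
Qed.
End Spec.
Section Uniq.
Variable R : realType.
Implicit Types M S L : 'M[R]_2.

Lemma Ptr M : M^T = M -> (PmM M)^T = PmM M.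
Proof. by move=> hM; rewrite /PmM linearZ /= linearB /= hM linearZ /= trmx1. Qed.

Lemma rd_scalar M k : M = k *: 1 -> rdM M = 0.
Proof.
move=> ->; rewrite /rdM /mA /mB /mC m2_1 m2_scale !mxE /=.
by rewrite subrr mulr0 expr0n /= mulr0 addr0 sqrtr0.
Qed.

Lemma scalar_rd0 M : M^T = M -> rdM M = 0 -> M = mA M *: 1.
Proof.
move=> hM hr; have := rd_sq M; rewrite hr expr0n /= => h.
have h1 : (mA M - mB M) ^+ 2 = 0.
  apply/eqP; rewrite eq_le sqr_ge0 andbT.
  have := sqr_ge0 (mC M); lra.
have h2 : mC M ^+ 2 = 0.
  apply/eqP; rewrite eq_le sqr_ge0 andbT.
  have := sqr_ge0 (mA M - mB M); lra.
move/eqP: h1; rewrite sqrf_eq0 subr_eq0 => /eqP h1.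
move/eqP: h2; rewrite sqrf_eq0 => /eqP h2.
by rewrite {1}(M_m2 hM) m2_1 m2_scale h1 h2 !mulr0 mulr1.
Qed.

Lemma mexp_scalar (a : R) : mexp (a *: 1) = expR a *: (1 : 'M[R]_2).
Proof.
have -> : a *: (1 : 'M[R]_2) = a *: 1 + a *: 0 by rewrite scaler0 addr0.
rewrite mexp_PQ ?scaler0 ?addr0 ?mul1r ?mulr0 ?mul0r ?addr0 //.
Qed.

Lemma PQrel M : M^T = M -> rdM M != 0 ->
  [/\ PmM M * PmM M = PmM M, QmM M * QmM M = QmM M, PmM M * QmM M = 0,
      QmM M * PmM M = 0 & PmM M + QmM M = 1].
Proof.
move=> hM hr; have hP := PP hM hr.
by have [? ? ? ?] := idem_rel hP; split.
Qed.

Lemma mexp_sym M : M^T = M -> rdM M != 0 ->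
  mexp M = expR (s1M M) *: PmM M + expR (s2M M) *: QmM M.
Proof.
move=> hM hr; have [? ? ? ? ?] := PQrel hM hr.
by rewrite {1}(Mdec hM hr) mexp_PQ.
Qed.

Lemma scaleP_inj (P : 'M[R]_2) (a b : R) : P != 0 -> a *: P = b *: P -> a = b.
Proof.
move=> hP /eqP; rewrite -subr_eq0 -scalerBl scaler_eq0 (negbTE hP) orbF subr_eq0.
by move/eqP.
Qed.

Lemma comb1 (a b : R) (X : 'M[R]_2) : a *: X + b *: (1 - X) = b *: 1 + (a - b) *: X.
Proof. by rewrite scalerBr scalerBl addrCA. Qed.

Lemma lin_aux (S L P Q PL : 'M[R]_2) (sS rS sL rL e1 e2 : R) : e1 - e2 != 0 ->
  S = sS *: (P + Q) + rS *: P -> S = e2 *: (P + Q) + (e1 - e2) *: PL ->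
  rL *: PL = L - sL *: (P + Q) ->
  L = (sL + rL / (e1 - e2) * (sS - e2) + rL / (e1 - e2) * rS) *: P +
      (sL + rL / (e1 - e2) * (sS - e2)) *: Q.
Proof.
move=> he h1 h2 h3; apply/matrixP => i j.
have e1' := congr1 (fun X : 'M[R]_2 => X i j) h1.
have e2' := congr1 (fun X : 'M[R]_2 => X i j) h2.
have e3' := congr1 (fun X : 'M[R]_2 => X i j) h3.
rewrite /= !mxE in e1' e2' e3'; rewrite !mxE.
have hpl : PL i j = (S i j - e2 * (P i j + Q i j)) / (e1 - e2).
  by rewrite e2'; field.

have -> : L i j = rL * ((sS * (P i j + Q i j) + rS * P i j - e2 * (P i j + Q i j)) / (e1 - e2)) + sL * (P i j + Q i j).
  by rewrite -e1' -hpl e3' subrK.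
by field.
Qed.

Lemma combM (a b : R) (X Y Z : 'M[R]_2) : (a *: X + b *: Y) * Z = a *: (X * Z) + b *: (Y * Z).
Proof. by rewrite mulrDl -!scalerAl. Qed.

Lemma trcomb (a b : R) (P : 'M[R]_2) : P^T = P -> (a *: P + b *: (1 - P))^T = a *: P + b *: (1 - P).
Proof. move=> h; rewrite linearD /= !linearZ /= linearB /= trmx1 h //. Qed.

Lemma log_unique S L : S^T = S -> rdM S != 0 -> 0 < s2M S -> L^T = L ->
  mexp L = S -> L = LmM S.
Proof.
move=> hS hrS hs2 hL eL.
have [PP1 QQ1 PQ1 QP1 PQs] := PQrel hS hrS.
have hSd := Mdec hS hrS.
set P := PmM S in PP1 QQ1 PQ1 QP1 PQs hSd *; set Q := QmM S in QQ1 PQ1 QP1 PQs hSd *.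
have hP0 : P != 0.
  apply/eqP => P0; have : S = s2M S *: 1.
    by rewrite {1}hSd -PQs P0 scaler0 !add0r.
  by move/rd_scalar => h; rewrite h eqxx in hrS.
have hQ0 : Q != 0.
  apply/eqP => Q0; have : S = s1M S *: 1.
    by rewrite {1}hSd -PQs Q0 scaler0 !addr0.
  by move/rd_scalar => h; rewrite h eqxx in hrS.
case: (eqVneq (rdM L) 0) => hrL.
  have : S = expR (mA L) *: 1 by rewrite -eL {1}(scalar_rd0 hL hrL) mexp_scalar.
  by move/rd_scalar => h; rewrite h eqxx in hrS.
have eL' := mexp_sym hL hrL.
rewrite /QmM comb1 in eL'.
set e1 := expR (s1M L) in eL'; set e2 := expR (s2M L) in eL'.
have he : e1 - e2 != 0.
  apply/eqP => he; have : S = e2 *: 1 by rewrite -eL eL' he scale0r addr0.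
  by move/rd_scalar => h; rewrite h eqxx in hrS.
have hS' : S = s2M S *: (P + Q) + rdM S *: P.
  by rewrite PQs /P /PmM scalerA mulfV // scale1r addrC subrK.
have hLdef : rdM L *: PmM L = L - s2M L *: 1.
  by rewrite /PmM scalerA mulfV // scale1r.
set y := rdM L / (e1 - e2).
set beta := s2M L + y * (s2M S - e2).
set alpha := beta + y * rdM S.
have hLPQ : L = alpha *: P + beta *: Q.
  apply: (lin_aux he hS') => //.
    by rewrite -eL eL' PQs.
  by rewrite hLdef PQs.
have [eA eB] : expR alpha = s1M S /\ expR beta = s2M S.
  have eq1 := eL; rewrite hLPQ mexp_PQ // {1}hSd in eq1.
  split.
    have := congr1 (fun X => X * P) eq1; rewrite /= !combM PP1 QP1 !scaler0 !addr0.
    exact: scaleP_inj.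
  have := congr1 (fun X => X * Q) eq1; rewrite /= !combM QQ1 PQ1 !scaler0 !add0r.
  exact: scaleP_inj.
by rewrite hLPQ /LmM -/P -/Q -eA -eB !expRK.
Qed.

Lemma mlog_eq S : S^T = S -> rdM S != 0 -> 0 < s2M S -> mlog S = LmM S.
Proof.
move=> hS hr hs2.
have hs1 : 0 < s1M S by have := s_diff S; have := rd_ge0 S; lra.
apply: xget_unique.
  split.
    by rewrite /LmM /QmM trcomb // Ptr.
  have [? ? ? ? ?] := PQrel hS hr.
  by rewrite /LmM mexp_PQ // !lnK ?posrE // -Mdec.
by move=> L [hL eL]; exact: log_unique.
Qed.
End Uniq.
Section Lim.
Variable R : realType.

Lemma inv_cvg0 : (fun m : nat => (m%:R : R)^-1) @ \oo --> 0.
Proof.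
have := (@gtr0_cvgV0 R nat \oo _ (fun m : nat => m%:R)).
move=> h; apply/h; last exact: cvgr_idn.
near=> m; rewrite ltr0n; near: m; by exists 1%N.
Unshelve. all: by end_near.
Qed.

Lemma expneg_cvg0 (c : R) : c < 0 -> (fun m : nat => expR (m%:R * c)) @ \oo --> 0.
Proof.
move=> hc.
have -> : (fun m : nat => expR (m%:R * c)) = (fun m : nat => expR c ^+ m).
  by apply/funext => m; rewrite expRM_natl.
apply: cvg_expr; rewrite ger0_norm ?expR_ge0 // expR_lt1 //.
Qed.

Lemma GE (J : finType) (a e : J -> R) (E : R) (j0 : J) :
  (forall j, 0 <= a j) -> 0 < a j0 -> e j0 = E ->
  (forall j, 0 < a j -> e j <= E) ->
  (fun m : nat => m%:R^-1 * ln (\sum_j a j * expR (m%:R * e j))) @ \oo --> E.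
Proof.
move=> a0 aj0 ej0 hE.
set A := \sum_j a j.
have hA : a j0 <= A.
  by rewrite /A (bigD1 j0) //= lerDl sumr_ge0.
have Apos : 0 < A by apply: lt_le_trans hA.
have lo m : a j0 * expR (m%:R * E) <= \sum_j a j * expR (m%:R * e j).
  rewrite (bigD1 j0) //= ej0 lerDl sumr_ge0 // => j _.
  by rewrite mulr_ge0 ?expR_ge0.
have hi m : \sum_j a j * expR (m%:R * e j) <= A * expR (m%:R * E).
  rewrite /A mulr_suml; apply: ler_sum => j _.
  have [aj|aj] := eqVneq (a j) 0; first by rewrite aj !mul0r.
  have ajp : 0 < a j by rewrite lt_def aj a0.
  rewrite ler_pM2l // ler_expR ler_wpM2l //.
  exact: hE.
apply: (@squeeze_cvgr _ _ _ R (fun m : nat => E + m%:R^-1 * ln (a j0))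
  (fun m : nat => E + m%:R^-1 * ln A)).
- near=> m.
  have mpos : (0 : R) < m%:R by rewrite ltr0n; near: m; exists 1%N.
  have Sp : 0 < \sum_j a j * expR (m%:R * e j).
    by apply: lt_le_trans (lo m); rewrite mulr_gt0 ?expR_gt0.
  have e1 : E + m%:R^-1 * ln (a j0) = m%:R^-1 * ln (a j0 * expR (m%:R * E)).
    rewrite lnM ?posrE ?expR_gt0 // expRK mulrDr mulrA mulVf ?gt_eqF // mul1r addrC //.
  have e2 : E + m%:R^-1 * ln A = m%:R^-1 * ln (A * expR (m%:R * E)).
    rewrite lnM ?posrE ?expR_gt0 // expRK mulrDr mulrA mulVf ?gt_eqF // mul1r addrC //.
  rewrite e1 e2; apply/andP; split.
    apply: ler_wpM2l; first by rewrite invr_ge0 ltW.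
    by rewrite ler_ln ?posrE ?mulr_gt0 ?expR_gt0.
  apply: ler_wpM2l; first by rewrite invr_ge0 ltW.
  by rewrite ler_ln ?posrE ?mulr_gt0 ?expR_gt0.
- rewrite -[X in _ --> X]addr0.
  apply: (@cvgD _ _ _ _ _ (fun=> E) (fun m : nat => m%:R^-1 * ln (a j0))); first exact: cvg_cst.
  rewrite -(mul0r (ln (a j0))); apply: cvgM; [exact: inv_cvg0 | exact: cvg_cst].
- rewrite -[X in _ --> X]addr0.
  apply: (@cvgD _ _ _ _ _ (fun=> E) (fun m : nat => m%:R^-1 * ln (A))); first exact: cvg_cst.
  rewrite -(mul0r (ln (A))); apply: cvgM; [exact: inv_cvg0 | exact: cvg_cst].
Unshelve. all: by end_near.
Qed.
End Lim.
Section Prob.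
Variable R : realType.

Lemma bigmax_ge (T : finType) (P : pred T) (F : T -> R) x0 j :
  P j -> F j <= \big[Num.max/x0]_(k | P k) F k.
Proof. exact: le_bigmax_cond. Qed.

Lemma bigmax_att (T : finType) (P : pred T) (F : T -> R) j1 :
  P j1 -> exists2 k, P k & \big[Num.max/F j1]_(k | P k) F k = F k.
Proof.
move=> Pj1.
apply: (big_ind (fun x => exists2 k, P k & x = F k)).
- by exists j1.
- move=> x y [k1 Pk1 ->] [k2 Pk2 ->].
  case: (leP (F k1) (F k2)) => _; [by exists k2 | by exists k1].
- by move=> i Pi; exists i.
Qed.

Lemma vec2E (w : 'cV[R]_2) : w = vec2 (w i0 0) (w i1 0).
Proof.
apply/matrixP => i j; rewrite !mxE (ord1 j).
by case: (ord2P i) => ->.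
Qed.

Lemma vec2_entries (a b : R) : (vec2 a b) i0 0 = a /\ (vec2 a b) i1 0 = b.
Proof. by rewrite !mxE. Qed.

Lemma vecTvec (a b c d : R) : (vec2 a b)^T *m vec2 c d = (a * c + b * d)%:M.
Proof.
apply/matrixP => i j; rewrite !mxE !big_ord_recl big_ord0 !mxE /= (ord1 i) (ord1 j) /=.
by rewrite addr0 mulr1n.
Qed.

Lemma outer_mul (a b c d : R) :
  (vec2 a b *m (vec2 a b)^T) * (vec2 c d *m (vec2 c d)^T) =
  (a * c + b * d) *: (vec2 a b *m (vec2 c d)^T).
Proof.
rewrite -mulmxE mulmxA -[vec2 a b *m _ *m _]mulmxA vecTvec.
by rewrite mul_mx_scalar -scalemxAl.
Qed.

Definition Um (phi : R) : 'M[R]_2 := uvec phi *m (uvec phi)^T.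
Definition Vm (phi : R) : 'M[R]_2 := vvec phi *m (vvec phi)^T.

Lemma UV_rel (phi : R) :
  [/\ Um phi * Um phi = Um phi, Vm phi * Vm phi = Vm phi, Um phi * Vm phi = 0,
      Vm phi * Um phi = 0 & Um phi + Vm phi = 1].
Proof.
have h := cos2Dsin2 phi.
rewrite /Um /Vm /uvec /vvec; split.
- rewrite outer_mul (_ : _ + _ = 1) ?scale1r //; lra.
- rewrite outer_mul (_ : _ + _ = 1) ?scale1r //; lra.
- by rewrite outer_mul (_ : _ + _ = 0) ?scale0r //; lra.
- by rewrite outer_mul (_ : _ + _ = 0) ?scale0r //; lra.
- rewrite !outer2 m2_add m2_1; congr m2; lra.
Qed.

Lemma mexp_X (l m phi k : R) :
  mexp (k *: spectral l m phi) = expR (k * l) *: Um phi + expR (k * m) *: Vm phi.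
Proof.
have [? ? ? ? ?] := UV_rel phi.
by rewrite /spectral scalerDr !scalerA mexp_PQ.
Qed.

End Prob.
Section Fam.
Variable R : realType.
Variables (K : finType) (c : K -> R) (w : K -> 'cV[R]_2).
Definition xw k := w k i0 0.
Definition yw k := w k i1 0.
Definition Sf := \sum_k c k *: (w k *m (w k)^T).

Lemma Sf_entry i j : Sf i j = \sum_k c k * (w k i 0 * w k j 0).
Proof. rewrite summxE; apply: eq_bigr => k _; by rewrite !mxE big_ord1 !mxE. Qed.

Lemma Sf_tr : Sf^T = Sf.
Proof.
apply/matrixP => i j; rewrite mxE !Sf_entry; apply: eq_bigr => k _.
by rewrite mulrC [w k j 0 * _]mulrC mulrC.
Qed.

Lemma Sf_A : mA Sf = \sum_k c k * (xw k * xw k). Proof. exact: Sf_entry. Qed.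
Lemma Sf_B : mB Sf = \sum_k c k * (yw k * yw k). Proof. exact: Sf_entry. Qed.
Lemma Sf_C : mC Sf = \sum_k c k * (xw k * yw k). Proof. exact: Sf_entry. Qed.

Lemma Sf_trace : (forall k, xw k ^+ 2 + yw k ^+ 2 = 1) -> mA Sf + mB Sf = \sum_k c k.
Proof.
move=> h; rewrite Sf_A Sf_B -big_split /=; apply: eq_bigr => k _.
by rewrite -mulrDr -!expr2 h mulr1.
Qed.

Lemma Sf_det : mA Sf * mB Sf - mC Sf ^+ 2 =
  2^-1 * \sum_k \sum_l c k * c l * (xw k * yw l - yw k * xw l) ^+ 2.
Proof.
set Tf := fun k l => c k * (xw k * xw k) * (c l * (yw l * yw l)).
set Mf := fun k l => c k * (xw k * yw k) * (c l * (xw l * yw l)).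
have eT : forall k l, c k * c l * (xw k * yw l - yw k * xw l) ^+ 2 =
  Tf k l + Tf l k - 2 * Mf k l by move=> k l; rewrite /Tf /Mf; ring.
have hAB : mA Sf * mB Sf = \sum_k \sum_l Tf k l.
  by rewrite Sf_A Sf_B big_distrlr.
have hC : mC Sf ^+ 2 = \sum_k \sum_l Mf k l.
  by rewrite expr2 Sf_C big_distrlr.
have hR : \sum_k \sum_l c k * c l * (xw k * yw l - yw k * xw l) ^+ 2 =
   2 * (\sum_k \sum_l Tf k l) - 2 * (\sum_k \sum_l Mf k l).
  rewrite (eq_bigr (fun k => \sum_l (Tf k l + Tf l k - 2 * Mf k l))); last first.
    by move=> k _; apply: eq_bigr => l _; rewrite eT.
  rewrite (eq_bigr (fun k => \sum_l Tf k l + \sum_l Tf l k - 2 * \sum_l Mf k l)); last first.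
    by move=> k _; rewrite sumrB big_split /= mulr_sumr.
  rewrite sumrB big_split /= -mulr_sumr.
  rewrite [\sum_k \sum_l Tf l k]exchange_big /=.
  ring.
rewrite hR hAB hC; field => //.
Qed.

End Fam.

Section Cross.
Variable R : realType.

Lemma cross0_aligned (a b c d : R) : a ^+ 2 + b ^+ 2 = 1 -> c ^+ 2 + d ^+ 2 = 1 ->
  a * d - b * c = 0 -> (c = a /\ d = b) \/ (c = - a /\ d = - b).
Proof.
move=> h1 h2 h3.
set k := a * c + b * d.
have L : k ^+ 2 + (a * d - b * c) ^+ 2 = (a ^+ 2 + b ^+ 2) * (c ^+ 2 + d ^+ 2).
  by rewrite /k; ring.
rewrite h1 h2 h3 mulr1 expr0n /= addr0 in L.
have ec : c - k * a = c * (1 - (a ^+ 2 + b ^+ 2)) + b * (b * c - a * d) by rewrite /k; ring.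
have ed : d - k * b = d * (1 - (a ^+ 2 + b ^+ 2)) + a * (a * d - b * c) by rewrite /k; ring.
rewrite h1 subrr !mulr0 !add0r in ec ed.
rewrite h3 mulr0 in ed.
have h3' : b * c - a * d = 0 by lra.
rewrite h3' mulr0 in ec.
move/eqP: ec; rewrite subr_eq0 => /eqP ec.
move/eqP: ed; rewrite subr_eq0 => /eqP ed.
move/eqP: L; rewrite sqrf_eq1 => /orP [] /eqP hk.
  by left; rewrite ec ed hk !mul1r.
by right; rewrite ec ed hk !mulN1r.
Qed.

Lemma aligned_cross (u v : 'cV[R]_2) : aligned u v ->
  u i0 0 * v i1 0 - u i1 0 * v i0 0 = 0.
Proof.
case=> ->; first by rewrite mulrC subrr.
by rewrite !mxE; ring.
Qed.

Lemma cross_aligned (u v : 'cV[R]_2) :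
  u i0 0 ^+ 2 + u i1 0 ^+ 2 = 1 -> v i0 0 ^+ 2 + v i1 0 ^+ 2 = 1 ->
  u i0 0 * v i1 0 - u i1 0 * v i0 0 = 0 -> aligned v u.
Proof.
move=> h1 h2 h3.
case: (cross0_aligned h1 h2 h3) => [[e1 e2]|[e1 e2]].
  left; rewrite (vec2E v) (vec2E u) e1 e2 //.
right; rewrite (vec2E v) (vec2E u) e1 e2.
apply/matrixP => i j; rewrite !mxE; by case: (i : nat) => [|?] /=.
Qed.

End Cross.
Section Homog.
Variable R : realType.
Implicit Types M : 'M[R]_2.

Lemma mA_Z (k : R) M : mA (k *: M) = k * mA M. Proof. by rewrite /mA mxE. Qed.
Lemma mB_Z (k : R) M : mB (k *: M) = k * mB M. Proof. by rewrite /mB mxE. Qed.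
Lemma mC_Z (k : R) M : mC (k *: M) = k * mC M. Proof. by rewrite /mC mxE. Qed.

Lemma rd_Z (k : R) M : 0 <= k -> rdM (k *: M) = k * rdM M.
Proof.
move=> hk; rewrite /rdM mA_Z mB_Z mC_Z.
have -> : (k * mA M - k * mB M) ^+ 2 + 4 * (k * mC M) ^+ 2 =
  k ^+ 2 * ((mA M - mB M) ^+ 2 + 4 * mC M ^+ 2) by ring.
by rewrite sqrtrM ?sqr_ge0 // sqrtr_sqr ger0_norm.
Qed.

Lemma s1_Z (k : R) M : 0 <= k -> s1M (k *: M) = k * s1M M.
Proof. by move=> hk; rewrite /s1M rd_Z // mA_Z mB_Z; ring. Qed.

Lemma s2_Z (k : R) M : 0 <= k -> s2M (k *: M) = k * s2M M.
Proof. by move=> hk; rewrite /s2M rd_Z // mA_Z mB_Z; ring. Qed.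

Lemma Pm_Z (k : R) M : 0 < k -> PmM (k *: M) = PmM M.
Proof.
move=> hk; rewrite /PmM rd_Z ?ltW // s2_Z ?ltW // -scalerA -scalerBr scalerA.
by rewrite invfM mulrAC mulVf ?gt_eqF // mul1r.
Qed.

Lemma tr_Z (k : R) M : M^T = M -> (k *: M)^T = k *: M.
Proof. by move=> h; rewrite linearZ /= h. Qed.

End Homog.

Section WLim.
Variable R : realType.
Variables (K : finType) (f : K -> nat -> R) (k0 : K).
Hypothesis f0 : forall m, f k0 m = 1.
Hypothesis f1 : forall k, k != k0 -> f k @ \oo --> 0.

Lemma wsum_mx (a : K -> 'M[R]_2) :
  (fun m => \sum_k f k m *: a k) @ \oo --> a k0.
Proof.
have -> : a k0 = \sum_k (if k == k0 then 1 else 0) *: a k.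
  rewrite (bigD1 k0) //= eqxx scale1r big1 ?addr0 // => k /negbTE ->.
  by rewrite scale0r.
apply: cvg_big => //; first exact: add_continuous.
move=> k _; apply: cvgZ => //; last exact: cvg_cst.
case: eqP => [->|/eqP hk]; last exact: f1.
have -> : f k0 = fun=> 1 by apply/funext => m; rewrite f0.
exact: cvg_cst.
Qed.

Lemma wsum_r (a : K -> R) :
  (fun m => \sum_k f k m * a k) @ \oo --> a k0.
Proof.
have -> : a k0 = \sum_k (if k == k0 then 1 else 0) * a k.
  rewrite (bigD1 k0) //= eqxx mul1r big1 ?addr0 // => k /negbTE ->.
  by rewrite mul0r.
apply: cvg_big => //; first exact: add_continuous.
move=> k _; apply: cvgM => //; last exact: cvg_cst.
case: eqP => [->|/eqP hk]; last exact: f1.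
have -> : f k0 = fun=> 1 by apply/funext => m; rewrite f0.
exact: cvg_cst.
Qed.
End WLim.
Section Main.
Variables (R : realType) (n : nat) (X : 'I_n.+1 -> 'M[R]_2) (lam mu phi : 'I_n.+1 -> R).
Hypothesis hspec : forall i, X i = spectral (lam i) (mu i) (phi i).
Hypothesis hunique : forall k : 'I_n.+1 * bool, k != (ord0, true) ->
               eigval lam mu k < lam ord0.

Local Notation K := ('I_n.+1 * bool)%type.
Local Notation k0 := ((ord0, true) : K).
Local Notation nu := (eigval lam mu).
Local Notation w := (eigvec phi).
Local Notation l1 := (lam ord0).
Local Notation ms := (mu_star lam mu phi).
Local Notation u0 := (uvec (phi ord0)).

Lemma unit_w k : xw w k ^+ 2 + yw w k ^+ 2 = 1.
Proof.
rewrite /xw /yw /eigvec; case: k => i [] /=; rewrite /uvec /vvec !mxE /=.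
  exact: cos2Dsin2.
by rewrite sqrrN addrC cos2Dsin2.
Qed.

Lemma sumS m : \sum_(i < n.+1) mexp (m%:R *: X i) = Sf (fun k => expR (m%:R * nu k)) w.
Proof.
rewrite /Sf.
rewrite (eq_bigr (fun i => \sum_(b : bool) expR (m%:R * nu (i, b)) *: (w (i, b) *m (w (i, b))^T))).
  by rewrite pair_bigA; apply: eq_bigr => -[i b].
by move=> i _; rewrite big_bool /= hspec mexp_X.
Qed.

Lemma v0_not_aligned : ~ aligned (w (ord0, false)) u0.
Proof.
move/aligned_cross; rewrite /= /uvec /vvec !mxE /=.
have := cos2Dsin2 (phi ord0); lra.
Qed.

Lemma mu_star_ge k : k != k0 -> ~ aligned (w k) u0 -> nu k <= ms.
Proof.
move=> hk hal; apply: le_bigmax_cond; rewrite hk /=; exact/asboolPn.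
Qed.

Lemma mu_star_att : exists2 k, (k != k0) /\ ~ aligned (w k) u0 & nu k = ms.
Proof.
have HP : ((ord0, false) != k0) && ~~ `[< aligned (w (ord0, false)) u0 >].
  rewrite /=; apply/asboolPn; exact: v0_not_aligned.
have [k /andP [Pk1 /asboolPn Pk2] e] := @bigmax_att R _ (fun k : K => (k != k0) && ~~ `[< aligned (w k) u0 >]) nu (ord0, false) HP.
by exists k => //.
Qed.

Lemma ms_lt : ms < l1.
Proof. have [k [hk _] <-] := mu_star_att; exact: hunique. Qed.

Definition cT (k : K) (m : nat) : R := expR (m%:R * (nu k - l1)).
Definition Tm (m : nat) : 'M[R]_2 := Sf (fun k => cT k m) w.
Definition Sm (m : nat) : 'M[R]_2 := Sf (fun k => expR (m%:R * nu k)) w.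

Lemma cT0 m : cT k0 m = 1.
Proof. by rewrite /cT /= subrr mulr0 expR0. Qed.

Lemma cT1 k : k != k0 -> cT k @ \oo --> 0.
Proof. move=> hk; apply: expneg_cvg0; rewrite subr_lt0; exact: hunique. Qed.

Lemma S_T m : Sm m = expR (m%:R * l1) *: Tm m.
Proof.
rewrite /Sm /Tm /Sf scaler_sumr; apply: eq_bigr => k _.
by rewrite scalerA /cT -expRD; congr (expR _ *: _); ring.
Qed.

Lemma lim_T : Tm @ \oo --> w k0 *m (w k0)^T.
Proof. exact: (wsum_mx cT0 cT1). Qed.

Lemma lim_A : (fun m => mA (Tm m)) @ \oo --> xw w k0 * xw w k0.
Proof.
have -> : (fun m => mA (Tm m)) = (fun m => \sum_k cT k m * (xw w k * xw w k)).
  by apply/funext => m; rewrite /Tm Sf_A.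
exact: (wsum_r cT0 cT1).
Qed.

Lemma lim_B : (fun m => mB (Tm m)) @ \oo --> yw w k0 * yw w k0.
Proof.
have -> : (fun m => mB (Tm m)) = (fun m => \sum_k cT k m * (yw w k * yw w k)).
  by apply/funext => m; rewrite /Tm Sf_B.
exact: (wsum_r cT0 cT1).
Qed.

Lemma lim_C : (fun m => mC (Tm m)) @ \oo --> xw w k0 * yw w k0.
Proof.
have -> : (fun m => mC (Tm m)) = (fun m => \sum_k cT k m * (xw w k * yw w k)).
  by apply/funext => m; rewrite /Tm Sf_C.
exact: (wsum_r cT0 cT1).
Qed.

Lemma lim_rd : (fun m => rdM (Tm m)) @ \oo --> (1 : R).
Proof.
have h0 := unit_w k0.
set a := xw w k0 in h0 *; set b := yw w k0 in h0 *.
have -> : (1 : R) = Num.sqrt ((a * a - b * b) * (a * a - b * b) + 4 * ((a * b) * (a * b))).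
  have -> : (a * a - b * b) * (a * a - b * b) + 4 * ((a * b) * (a * b)) =
    (a ^+ 2 + b ^+ 2) ^+ 2 by ring.
  by rewrite h0 expr1n sqrtr1.
have -> : (fun m => rdM (Tm m)) = Num.sqrt \o (fun m =>
   (mA (Tm m) - mB (Tm m)) * (mA (Tm m) - mB (Tm m)) + 4 * (mC (Tm m) * mC (Tm m))).
  by apply/funext => m; rewrite /rdM /= !expr2.
apply: continuous_cvg; first exact: sqrt_continuous.
apply: cvgD.
  apply: cvgM; apply: cvgB; [exact: lim_A | exact: lim_B | exact: lim_A | exact: lim_B].
apply: cvgM; first exact: cvg_cst.
apply: cvgM; exact: lim_C.
Qed.

Lemma lim_s1T : (fun m => s1M (Tm m)) @ \oo --> (1 : R).
Proof.
have h0 := unit_w k0.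
have -> : (1 : R) = (xw w k0 * xw w k0 + yw w k0 * yw w k0 + 1) / 2.
  by rewrite -!expr2 h0; field.
rewrite /s1M; apply: (@cvgM _ _ _ _ (fun m => mA (Tm m) + mB (Tm m) + rdM (Tm m)) (fun=> 2^-1)); last exact: cvg_cst.
apply: cvgD; last exact: lim_rd.
apply: cvgD; [exact: lim_A | exact: lim_B].
Qed.

Lemma lim_s2T : (fun m => s2M (Tm m)) @ \oo --> (0 : R).
Proof.
have h0 := unit_w k0.
have -> : (0 : R) = (xw w k0 * xw w k0 + yw w k0 * yw w k0 - 1) / 2.
  rewrite -!expr2 h0 subrr mul0r //.
rewrite /s2M; apply: (@cvgM _ _ _ _ (fun m => mA (Tm m) + mB (Tm m) - rdM (Tm m)) (fun=> 2^-1)); last exact: cvg_cst.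
apply: cvgB; last exact: lim_rd.
apply: cvgD; [exact: lim_A | exact: lim_B].
Qed.

Lemma lim_P : (fun m => PmM (Tm m)) @ \oo --> w k0 *m (w k0)^T.
Proof.
have -> : w k0 *m (w k0)^T = 1^-1 *: (w k0 *m (w k0)^T - 0 *: 1).
  by rewrite invr1 scale1r scale0r subr0.
rewrite /PmM; apply: cvgZ.
  apply: (@cvgV _ _ _ _ (fun m => rdM (Tm m))); first exact: oner_neq0.
  exact: lim_rd.
apply: cvgB; first exact: lim_T.
apply: cvgZ; [exact: lim_s2T | exact: cvg_cst].
Qed.

Lemma trT_pos m : 0 < mA (Tm m) + mB (Tm m).
Proof.
rewrite /Tm Sf_trace; last exact: unit_w.
rewrite (bigD1 k0) //= cT0; apply: (lt_le_trans ltr01); rewrite lerDl.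
by apply: sumr_ge0 => k _; rewrite /cT expR_ge0.
Qed.

Lemma s1T_pos m : 0 < s1M (Tm m).
Proof. rewrite /s1M; have := trT_pos m; have := rd_ge0 (Tm m); lra. Qed.

Definition cr (p : K * K) : R := xw w p.1 * yw w p.2 - yw w p.1 * xw w p.2.

Lemma detS m : mA (Sm m) * mB (Sm m) - mC (Sm m) ^+ 2 =
  \sum_(p : K * K) (2^-1 * cr p ^+ 2) * expR (m%:R * (nu p.1 + nu p.2)).
Proof.
rewrite /Sm Sf_det pair_bigA mulr_sumr; apply: eq_bigr => -[k l] _ /=.
by rewrite /cr /= mulrDr expRD; ring.
Qed.

Lemma cr_self k : cr (k, k) = 0.
Proof. by rewrite /cr /= mulrC subrr. Qed.

Lemma cr_swap k l : cr (l, k) = - cr (k, l).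
Proof. rewrite /cr /=; ring. Qed.

Lemma cr_aligned k : aligned (w k) u0 -> cr (k0, k) = 0.
Proof.
move/aligned_cross => h; rewrite -oppr0 -h /cr /xw /yw /=; ring.
Qed.

Lemma aligned_cr k : cr (k0, k) = 0 -> aligned (w k) u0.
Proof.
move=> h; apply: (cross_aligned (u := w k0)) => //; exact: unit_w.
Qed.

Lemma cr_both k l : aligned (w k) u0 -> aligned (w l) u0 -> cr (k, l) = 0.
Proof.
rewrite /cr /xw /yw => hk hl.
case: hk => ->; case: hl => ->; rewrite ?mxE; ring.
Qed.

Lemma GE_bound (p : K * K) : 0 < 2^-1 * cr p ^+ 2 -> nu p.1 + nu p.2 <= l1 + ms.
Proof.
case: p => k l /= hp.
have crn : cr (k, l) != 0.
  by apply/eqP => h; move: hp; rewrite h expr0n /= mulr0 ltxx.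
have Hk1 : k != k0 -> nu k < l1 := @hunique k.
have Hl1 : l != k0 -> nu l < l1 := @hunique l.
case: (eqVneq k k0) => [ek|nk].
  subst k.
  have nl : l != k0 by apply/eqP => el; move: crn; rewrite el cr_self eqxx.
  have nal : ~ aligned (w l) u0 by move/cr_aligned => h; move: crn; rewrite h eqxx.
  have e0 : nu k0 = l1 by [].
  have := mu_star_ge nl nal; rewrite e0; lra.
case: (eqVneq l k0) => [el|nl].
  subst l.
  have nal : ~ aligned (w k) u0.
    by move/cr_aligned => h; move: crn; rewrite cr_swap h oppr0 eqxx.
  have e0 : nu k0 = l1 by [].
  have := mu_star_ge nk nal; rewrite e0; lra.
have := Hk1 nk; have := Hl1 nl => h1 h2.
case: (asboolP (aligned (w k) u0)) => ak.
  case: (asboolP (aligned (w l) u0)) => al.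
    by move: crn; rewrite cr_both ?eqxx.
  have := mu_star_ge nl al; lra.
have := mu_star_ge nk ak; lra.
Qed.

Lemma lim_lnD : (fun m : nat => m%:R^-1 * ln (mA (Sm m) * mB (Sm m) - mC (Sm m) ^+ 2))
   @ \oo --> l1 + ms.
Proof.
have [ks [nks naks] eks] := mu_star_att.
have -> : (fun m : nat => m%:R^-1 * ln (mA (Sm m) * mB (Sm m) - mC (Sm m) ^+ 2)) =
  (fun m : nat => m%:R^-1 * ln (\sum_(p : K * K) (2^-1 * cr p ^+ 2) * expR (m%:R * (nu p.1 + nu p.2)))).
  by apply/funext => m; rewrite detS.
apply: (@GE R _ (fun p => 2^-1 * cr p ^+ 2) (fun p => nu p.1 + nu p.2) (l1 + ms) (k0, ks)).
- by move=> p; rewrite mulr_ge0 ?invr_ge0 ?ler0n ?sqr_ge0.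
- rewrite mulr_gt0 ?invr_gt0 ?ltr0n // lt_def sqr_ge0 andbT sqrf_eq0.
  by apply/eqP => h; apply: naks; exact: aligned_cr.
- by rewrite /= eks.
- exact: GE_bound.
Qed.

Lemma detS_pos m : 0 < mA (Sm m) * mB (Sm m) - mC (Sm m) ^+ 2.
Proof.
have [ks [nks naks] eks] := mu_star_att.
rewrite detS (bigD1 (k0, ks)) //=.
apply: (@lt_le_trans _ _ ((2^-1 * cr (k0, ks) ^+ 2) * expR (m%:R * (nu (k0, ks).1 + nu (k0, ks).2)))).
  rewrite mulr_gt0 ?expR_gt0 // mulr_gt0 ?invr_gt0 ?ltr0n // lt_def sqr_ge0 andbT sqrf_eq0.
  by apply/eqP => h; apply: naks; exact: aligned_cr.
rewrite lerDl; apply: sumr_ge0 => p _; by rewrite mulr_ge0 ?expR_ge0 // mulr_ge0 ?invr_ge0 ?ler0n ?sqr_ge0.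
Qed.

Lemma s1S m : s1M (Sm m) = expR (m%:R * l1) * s1M (Tm m).
Proof. by rewrite S_T s1_Z ?expR_ge0. Qed.

Lemma s1S_pos m : 0 < s1M (Sm m).
Proof. by rewrite s1S mulr_gt0 ?expR_gt0 ?s1T_pos. Qed.

Lemma lim_a : (fun m : nat => m%:R^-1 * ln (s1M (Sm m))) @ \oo --> l1.
Proof.
have hlim : (fun m : nat => l1 + m%:R^-1 * ln (s1M (Tm m))) @ \oo --> l1.
  rewrite -[X in _ --> X]addr0.
  apply: (@cvgD _ _ _ _ _ (fun=> l1) (fun m : nat => m%:R^-1 * ln (s1M (Tm m)))); first exact: cvg_cst.
  rewrite -(mul0r 0); apply: cvgM; first exact: inv_cvg0.
  rewrite -ln1.
  have -> : (fun m : nat => ln (s1M (Tm m))) = (@ln R) \o (fun m => s1M (Tm m)) by [].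
  apply: continuous_cvg; first exact: continuous_ln.
  exact: lim_s1T.
apply: cvg_trans hlim; apply: near_eq_cvg; near=> m.
have mpos : (0 : R) < m%:R by rewrite ltr0n; near: m; exists 1%N.
rewrite s1S lnM ?posrE ?expR_gt0 ?s1T_pos // expRK mulrDr mulrA mulVf ?gt_eqF // mul1r //.
Unshelve. all: by end_near.
Qed.

Lemma lim_b : (fun m : nat => m%:R^-1 * ln (s2M (Sm m))) @ \oo --> ms.
Proof.
have hlim : (fun m : nat => m%:R^-1 * ln (mA (Sm m) * mB (Sm m) - mC (Sm m) ^+ 2)
   - m%:R^-1 * ln (s1M (Sm m))) @ \oo --> ms.
  have -> : ms = (l1 + ms) - l1 by ring.
  apply: cvgB; [exact: lim_lnD | exact: lim_a].
apply: cvg_trans hlim; apply: near_eq_cvg; near=> m.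
have h1 := s1S_pos m; have hD := detS_pos m.
have e : s2M (Sm m) = (mA (Sm m) * mB (Sm m) - mC (Sm m) ^+ 2) / s1M (Sm m).
  by rewrite -s_prod mulrC mulKf ?gt_eqF.
by rewrite e ln_div ?posrE // mulrBr.
Unshelve. all: by end_near.
Qed.

Lemma comb_help (c a b : R) (P1 P2 : 'M[R]_2) : P2 = P1 ->
  (c * a) *: P2 + (c * b) *: (1 - P2) = c *: (a *: P1 + b *: (1 - P1)).
Proof. by move=> ->; rewrite [RHS]scalerDr !scalerA. Qed.

Lemma UVk0 : w k0 *m (w k0)^T = Um (phi ord0). Proof. by []. Qed.

Lemma main_lim :
  (fun m : nat => m%:R^-1 *: mlog (\sum_(i < n.+1) mexp (m%:R *: X i))) @ \oo
    --> spectral l1 ms (phi ord0).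
Proof.
have [_ _ _ _ UV] := UV_rel (phi ord0).
have eV : 1 - Um (phi ord0) = Vm (phi ord0) by rewrite -UV addrC addKr.
have hlim : (fun m : nat => (m%:R^-1 * ln (s1M (Sm m))) *: PmM (Tm m) +
     (m%:R^-1 * ln (s2M (Sm m))) *: (1 - PmM (Tm m))) @ \oo --> spectral l1 ms (phi ord0).
  rewrite /spectral -/(Um _) -/(Vm _) -eV -UVk0.
  apply: cvgD; apply: cvgZ.
  - exact: lim_a.
  - exact: lim_P.
  - exact: lim_b.
  - apply: cvgB; [exact: cvg_cst | exact: lim_P].
apply: cvg_trans hlim; apply: near_eq_cvg.
have h2 : (2 : R)^-1 < 1 by lra.
have hrd := cvgr_gt _ lim_rd (2^-1) h2.
near=> m.
have hr : 2^-1 < rdM (Tm m) by near: m; exact: hrd.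
have St : (Sm m)^T = Sm m by exact: Sf_tr.
have rS : rdM (Sm m) != 0.
  rewrite S_T rd_Z ?expR_ge0 // mulf_neq0 ?gt_eqF ?expR_gt0 //.
  by apply: lt_trans hr; rewrite invr_gt0 ltr0n.
have s2pos : 0 < s2M (Sm m).
  have h1 := s1S_pos m; have hD := detS_pos m.
  have e : s2M (Sm m) = (mA (Sm m) * mB (Sm m) - mC (Sm m) ^+ 2) / s1M (Sm m).
    by rewrite -s_prod mulrC mulKf ?gt_eqF.
  by rewrite e divr_gt0.
have eP : PmM (Sm m) = PmM (Tm m) by rewrite S_T Pm_Z ?expR_gt0.
rewrite sumS -/(Sm m) mlog_eq // /LmM /QmM.
by apply: comb_help; rewrite eP.
Unshelve. all: by end_near.
Qed.


End Main.
Unset Implicit Arguments.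

(* The matrices are X_0, ..., X_n (n.+1 of them); X_0 plays the role of X_1. *)
Theorem theorem1 (R : realType) (n : nat) (X : 'I_n.+1 -> 'M[R]_2)
  (lam mu phi : 'I_n.+1 -> R)
  (hspec : forall i, X i = spectral (lam i) (mu i) (phi i))
  (horder : forall i, mu i <= lam i)
  (hphi : forall i, - (pi / 2) <= phi i <= pi / 2)
  (hunique : forall k : 'I_n.+1 * bool, k != (ord0, true) ->
               eigval lam mu k < lam ord0) :
  (fun m : nat => m%:R^-1 *: mlog (\sum_(i < n.+1) mexp (m%:R *: X i))) @ \oo
    --> spectral (lam ord0) (mu_star lam mu phi) (phi ord0).
Proof.
exact: (main_lim hspec hunique).
Qed.
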